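(* Let $V$ be a finite set of truth values and $\models_{\mathcal{D}_p,\mathcal{D}_c}$ a mixed consequence truth-relation on $V$, with a constant expressive semantics. Then it admits a G-conditional, and for every classical connective $C$ it admits a regular connective sharing a regularity rule with $C$.
   Context: $V$ contains distinct $1,0$; sets of designated values $\mathcal{D}$ satisfy $1\in\mathcal{D}$, $0\notin\mathcal{D}$; $\gamma\models_{\mathcal{D}_p,\mathcal{D}_c}\delta$ iff ($\gamma\subseteq\mathcal{D}_p\Rightarrow\delta\cap\mathcal{D}_c\neq\emptyset$). Semantics: valuations mapping atoms to $V$, each connective interpreted by a fixed truth function, extended compositionally, every assignment to finitely many distinct atoms realized; constant expressive: every value is the constant value of some formula. $\Gamma\vdash\Delta$ iff $v(\Gamma)\models v(\Delta)$ for all $v$; $\Gamma,A=\Gamma\cup\{A\}$. An $n$-ary connective $C$ is regular with rule $(\mathcal{B}^p,\mathcal{B}^c)$ ($\mathcal{B}^p,\mathcal{B}^c\subseteq\mathcal{P}(\{1..n\})^2$) if for all $\Gamma,\Delta,F_1..F_n$: $\Gamma,C(\vec F)\vdash\Delta$ iff for all $(B_p,B_c)\in\mathcal{B}^p$, $\Gamma\cup\{F_i:i\in B_p\}\vdash\{F_i:i\in B_c\}\cup\Delta$; $\Gamma\vdash C(\vec F),\Delta$ iff the same for all $(B_p,B_c)\in\mathcal{B}^c$. A classical connective is a truth function $\{0,1\}^n\to\{0,1\}$, regular in classical logic ($V=\{0,1\}$, relation $\models_{\{1\},\{1\}}$); two connectives share a regularity rule if some $(\mathcal{B}^p,\mathcal{B}^c)$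 is satisfied by both in their respective logics. ''Admits'' a connective: some truth function on $V$ interprets a connective with the property. A G-conditional satisfies $\Gamma\vdash A\to B,\Delta$ iff $\Gamma,A\vdash B,\Delta$, and $\Gamma,A\to B\vdash\Delta$ iff ($\Gamma\vdash A,\Delta$ and $\Gamma,B\vdash\Delta$). *)

(* Defs.v *)
From mathcomp Require Import all_boot.
Set Implicit Arguments. Unset Strict Implicit. Unset Printing Implicit Defensive.

Inductive form (K : Type) (ar : K -> nat) : Type :=
| Atom : nat -> form ar
| App : forall c : K, ('I_(ar c) -> form ar) -> form ar.
Arguments Atom {K ar}.
Arguments App {K ar}.

Definition interp (V K : Type) (ar : K -> nat) := forall c : K, ('I_(ar c) -> V) -> V.

Fixpoint eval (V K : Type) (ar : K -> nat) (I : interp V ar) (v : nat -> V)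
  (A : form ar) : V :=
  match A with
  | Atom n => v n
  | App c f => I c (fun i => eval I v (f i))
  end.

Definition cons (V : Type) (Dp Dc : pred V) (K : Type) (ar : K -> nat)
  (I : interp V ar) (Gamma Delta : form ar -> Prop) : Prop :=
  forall v : nat -> V,
    (forall A, Gamma A -> Dp (eval I v A)) ->
    exists B, Delta B /\ Dc (eval I v B).

Definition addf (T : Type) (G : T -> Prop) (A : T) : T -> Prop :=
  fun X => G X \/ X = A.
Definition unionf (T : Type) (G H : T -> Prop) : T -> Prop :=
  fun X => G X \/ H X.
Definition imgset (n : nat) (T : Type) (F : 'I_n -> T) (B : {set 'I_n}) : T -> Prop :=
  fun X => exists2 i, i \in B & X = F i.

Definition constant_expressive (V K : Type) (ar : K -> nat) (I : interp V ar) : Prop :=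
  forall x : V, exists A : form ar, forall v : nat -> V, eval I v A = x.

Definition regular (V : Type) (Dp Dc : pred V) (K : Type) (ar : K -> nat)
  (I : interp V ar) (c : K)
  (Bp Bc : {set ({set 'I_(ar c)} * {set 'I_(ar c)})}) : Prop :=
  forall (Gamma Delta : form ar -> Prop) (F : 'I_(ar c) -> form ar),
    (cons Dp Dc I (addf Gamma (App c F)) Delta <->
       (forall B, B \in Bp ->
          cons Dp Dc I (unionf Gamma (imgset F B.1)) (unionf (imgset F B.2) Delta)))
 /\ (cons Dp Dc I Gamma (addf Delta (App c F)) <->
       (forall B, B \in Bc ->
          cons Dp Dc I (unionf Gamma (imgset F B.1)) (unionf (imgset F B.2) Delta))).

Definition ext_ar (K : Type) (ar : K -> nat) (m : nat) : option K -> nat :=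
  fun o => match o with None => m | Some c => ar c end.

Definition ext_I (V K : Type) (ar : K -> nat) (I : interp V ar) (m : nat)
  (g : ('I_m -> V) -> V) : interp V (ext_ar ar m) :=
  fun o => match o return ('I_(ext_ar ar m o) -> V) -> V with
           | None => g
           | Some c => I c
           end.

(** Classical logic with the single n-ary connective f:
    V = bool, 1 = true, 0 = false, Dp = Dc = {1}. *)
Definition cl_ar (n : nat) : unit -> nat := fun _ => n.
Definition cl_I (n : nat) (f : ('I_n -> bool) -> bool) : interp bool (cl_ar n) :=
  fun _ => f.

Definition regular_classical (n : nat) (f : ('I_n -> bool) -> bool)
  (Bp Bc : {set ({set 'I_n} * {set 'I_n})}) : Prop :=
  @regular bool (pred1 true) (pred1 true) unit (cl_ar n) (cl_I f) tt Bp Bc.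

Definition classical_connective (n : nat) (f : ('I_n -> bool) -> bool) : Prop :=
  exists Bp Bc, regular_classical f Bp Bc.

Definition pair2 (T : Type) (A B : T) : 'I_2 -> T :=
  fun i => if val i == 0 then A else B.

Definition G_conditional (V : Type) (Dp Dc : pred V) (K : Type) (ar : K -> nat)
  (I : interp V ar) (g : ('I_2 -> V) -> V) : Prop :=
  let L := ext_I I g in
  let imp (A B : form (ext_ar ar 2)) : form (ext_ar ar 2) :=
      @App _ (ext_ar ar 2) None (pair2 A B) in
  forall (Gamma Delta : form (ext_ar ar 2) -> Prop) (A B : form (ext_ar ar 2)),
    (cons Dp Dc L Gamma (addf Delta (imp A B)) <->
       cons Dp Dc L (addf Gamma A) (addf Delta B))
 /\ (cons Dp Dc L (addf Gamma (imp A B)) Delta <->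
       (cons Dp Dc L Gamma (addf Delta A) /\ cons Dp Dc L (addf Gamma B) Delta)).

(* Main.v *)
Require Import Defs.
From mathcomp Require Import all_boot.
From Stdlib Require Import Classical FunctionalExtensionality.
Set Implicit Arguments. Unset Strict Implicit. Unset Printing Implicit Defensive.
Set Warnings "-notation-overridden".

Section VReg.
Variables (V : finType) (Dp Dc : {set V}) (K : Type) (ar : K -> nat) (I : interp V ar).
Variable n : nat.

Definition PB (B : {set 'I_n} * {set 'I_n}) (w : 'I_n -> V) :=
  [forall i in B.1, w i \in Dp] && [forall i in B.2, w i \notin Dc].
Definition Xs (S : {set ({set 'I_n} * {set 'I_n})}) w := [exists B in S, PB B w].

Variable g : ('I_n -> V) -> V.
Variables Bp Bc : {set ({set 'I_n} * {set 'I_n})}.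
Hypothesis gp : forall w, (g w \in Dp) = Xs Bp w.
Hypothesis gc : forall w, (g w \in Dc) = ~~ Xs Bc w.

Lemma reg_g : @regular V (mem Dp) (mem Dc) (option K) (ext_ar ar n) (ext_I I g) None Bp Bc.
Proof.
move=> Gamma Delta F.
pose w := fun v => fun i : 'I_n => eval (ext_I I g) v (F i).
have eC : forall v, eval (ext_I I g) v (App None F) = g (w v) := fun v => erefl.
have hPB1 : forall B v, PB B (w v) -> forall X, imgset F B.1 X -> eval (ext_I I g) v X \in Dp.
  move=> B v /andP[/forallP h _] X [i iB ->]; exact: (implyP (h i) iB).
have hPB2 : forall B v, PB B (w v) -> forall X, imgset F B.2 X -> eval (ext_I I g) v X \in Dc -> False.
  move=> B v /andP[_ /forallP h] X [i iB ->] hc; by move: (implyP (h i) iB); rewrite hc.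
have hPB3 : forall B v, (forall X, imgset F B.1 X -> eval (ext_I I g) v X \in Dp) ->
   ~ (exists X, imgset F B.2 X /\ eval (ext_I I g) v X \in Dc) -> PB B (w v).
  move=> B v h1 h2; apply/andP; split; apply/forallP => i; apply/implyP => iB.
    by apply: h1; exists i.
  apply/negP => hc; apply: h2; exists (F i); split => //; by exists i.
split; split.
- move=> H B BS v Hv.
  case: (classic (exists X, imgset F B.2 X /\ eval (ext_I I g) v X \in Dc)) => [[X [hX hc]]|nX].
    by exists X; split => //; left.
  have hP : PB B (w v) by apply: hPB3 => // X hX; apply: Hv; right.
  have [X [hX hc]] : exists X, Delta X /\ eval (ext_I I g) v X \in Dc.
    apply: H => X [hX|->]; first by apply: Hv; left.
    change (g (w v) \in Dp); rewrite gp; apply/existsP; exists B; by rewrite BS hP.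
  by exists X; split => //; right.
- move=> H v Hv.
  have hC : addf Gamma (App None F) (App None F) by right.
  have hg : g (w v) \in Dp := Hv (App None F) hC.
  move: hg; rewrite gp => /existsP[B /andP[BS hP]].
  have [X [[hX|hX] hc]] := H B BS v (fun X hX => match hX with or_introl h => Hv X (or_introl h) | or_intror h => hPB1 B v hP X h end).
    by exfalso; exact: (hPB2 B v hP X hX hc).
  by exists X.
- move=> H B BS v Hv.
  case: (classic (exists X, imgset F B.2 X /\ eval (ext_I I g) v X \in Dc)) => [[X [hX hc]]|nX].
    by exists X; split => //; left.
  have hP : PB B (w v) by apply: hPB3 => // X hX; apply: Hv; right.
  have [X [[hX|->] hc]] := H v (fun X hX => Hv X (or_introl hX)).
    by exists X; split => //; right.
  have hg : g (w v) \in Dc := hc.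
  move: hg; rewrite gc => /negP; case.
  apply/existsP; exists B; by rewrite BS hP.
- move=> H v Hv.
  case E: (g (w v) \in Dc).
    by exists (App None F); split; [right | exact: E].
  move: E; rewrite gc => /negbFE /existsP[B /andP[BS hP]].
  have [X [[hX|hX] hc]] := H B BS v (fun X hX => match hX with or_introl h => Hv X h | or_intror h => hPB1 B v hP X h end).
    by exfalso; exact: (hPB2 B v hP X hX hc).
  by exists X; split => //; left.
Qed.
End VReg.

Section Pick.
Variables (V : finType) (one zero : V) (Dp Dc : {set V}).
Hypotheses (one_p : one \in Dp) (zero_p : zero \notin Dp) (one_c : one \in Dc) (zero_c : zero \notin Dc).
Variable n : nat.
Definition PBc (B : {set 'I_n} * {set 'I_n}) (u : 'I_n -> bool) :=
  [forall i in B.1, u i] && [forall i in B.2, ~~ u i].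
Definition Xc (S : {set ({set 'I_n} * {set 'I_n})}) u := [exists B in S, PBc B u].
Variables Bp Bc : {set ({set 'I_n} * {set 'I_n})}.
Hypothesis H : forall u, Xc Bp u = ~~ Xc Bc u.

Definition gcl (w : 'I_n -> V) : V :=
  odflt one [pick x | ((x \in Dp) == Xs Dp Dc Bp w) && ((x \in Dc) == ~~ Xs Dp Dc Bc w)].

Lemma gcl_spec w : ((gcl w \in Dp) = Xs Dp Dc Bp w) /\ ((gcl w \in Dc) = ~~ Xs Dp Dc Bc w).
Proof.
rewrite /gcl; case: pickP => [x /andP[/eqP -> /eqP ->] //|Hn]; exfalso.
case EX: (Xs Dp Dc Bp w); case EY: (Xs Dp Dc Bc w).
- have [i /andP[hp hc]] : exists i, (w i \in Dp) && (w i \notin Dc).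
    apply: NNPP => nE.
    pose u i := w i \in Dp.
    have Hu : forall B, PB Dp Dc B w -> PBc B u.
      move=> B /andP[/forallP h1 /forallP h2]; apply/andP; split; apply/forallP => i.
        exact: h1.
      apply/implyP => iB; have := implyP (h2 i) iB; apply: contra => hp.
      apply/negPn/negP => hc; apply: nE; exists i; by rewrite /u in hp; rewrite hp hc.
    move: EX EY => /existsP[B /andP[BS hB]] /existsP[B' /andP[BS' hB']].
    have := H u; have -> : Xc Bp u by apply/existsP; exists B; rewrite BS Hu.
    have -> : Xc Bc u by apply/existsP; exists B'; rewrite BS' Hu.
    by [].
  by move: (Hn (w i)); rewrite hp (negbTE hc) EX EY.
- by move: (Hn one); rewrite one_p one_c EX EY.
- by move: (Hn zero); rewrite (negbTE zero_p) (negbTE zero_c) EX EY.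
- have [i /andP[hc hp]] : exists i, (w i \in Dc) && (w i \notin Dp).
    apply: NNPP => nE.
    pose u i := w i \in Dc.
    have Hu : forall B, PBc B u -> PB Dp Dc B w.
      move=> B /andP[/forallP h1 /forallP h2]; apply/andP; split; apply/forallP => i.
        apply/implyP => iB; have := implyP (h1 i) iB; rewrite /u => hc.
        apply/negPn/negP => hp; apply: nE; exists i; by rewrite hp hc.
      exact: h2.
    have := H u; case E1: (Xc Bp u); case E2: (Xc Bc u) => // _; rewrite /Xs in EX EY.
      move: E1; rewrite /Xc => /existsP[B /andP[BS hB]]; move/negbT: EX => /negP; apply; apply/existsP; exists B; by rewrite BS Hu.
    move: E2; rewrite /Xc => /existsP[B /andP[BS hB]]; move/negbT: EY => /negP; apply; apply/existsP; exists B; by rewrite BS Hu.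
  by move: (Hn (w i)); rewrite (negbTE hp) hc EX EY.
Qed.
End Pick.

Lemma char (K : Type) (ar : K -> nat) (I : interp bool ar) (v0 : nat -> bool)
  (G D : form ar -> Prop) :
  (forall k, v0 k -> G (Atom k)) -> (forall k, ~~ v0 k -> D (Atom k)) ->
  cons (pred1 true) (pred1 true) I G D <->
  ((forall A, G A -> eval I v0 A) -> exists B, D B /\ eval I v0 B).
Proof.
move=> hG hD; split.
- move=> H hall; have [B [hB hv]] := H v0 (fun A hA => introT eqP (hall A hA)).
  by exists B; split => //; move/eqP: hv.
- move=> H v Gv.
  case: (classic (forall k, v k = v0 k)) => [e|ne].
    have ev : v = v0 by apply: functional_extensionality.
    subst v; have [B [hB hv]] := H (fun A hA => elimT eqP (Gv A hA)).
    by exists B; split => //=; rewrite hv.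
  have [k /= hk] := not_all_ex_not _ _ ne.
  case e: (v0 k).
    by move: (Gv _ (hG k e)) => /= /eqP vk; exfalso; apply: hk; rewrite vk e.
  exists (Atom k); split; first by apply: hD; rewrite e.
  by move: hk; rewrite e /=; case: (v k).
Qed.

Lemma cl_char (n : nat) (f : ('I_n -> bool) -> bool) Bp Bc :
  regular_classical f Bp Bc -> forall u, f u = Xc Bp u /\ ~~ f u = Xc Bc u.
Proof.
move=> Hr u.
pose v0 k : bool := if (insub k : option 'I_n) is Some i then u i else false.
have v0E : forall i : 'I_n, v0 (val i) = u i by move=> i; rewrite /v0 valK.
pose Gu (X : form (cl_ar n)) := exists k, v0 k /\ X = Atom k.
pose Du (X : form (cl_ar n)) := exists k, ~~ v0 k /\ X = Atom k.
pose F := fun i : 'I_n => @Atom unit (cl_ar n) (val i).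
have [[L1 L2] [R1 R2]] := Hr Gu Du F.
have eC : eval (cl_I f) v0 (App tt F) = f u.
  rewrite /=; congr f; apply: functional_extensionality => i; exact: v0E.
have hGu : forall X, Gu X -> eval (cl_I f) v0 X by move=> X [k [hk ->]].
have hDu : forall X, Du X -> ~~ eval (cl_I f) v0 X by move=> X [k [hk ->]].
have hF : forall i, eval (cl_I f) v0 (F i) = u i := v0E.
have cG1 : forall G, (forall X, Gu X -> G X) -> forall k, v0 k -> G (Atom k).
  by move=> G hG k hk; apply: hG; exists k.
have cD1 : forall D, (forall X, Du X -> D X) -> forall k, ~~ v0 k -> D (Atom k).
  by move=> D hD k hk; apply: hD; exists k.
have wit : forall B, ~~ PBc B u ->
   cons (pred1 true) (pred1 true) (cl_I f) (unionf Gu (imgset F B.1)) (unionf (imgset F B.2) Du).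
  move=> B nP; apply/char.
  - by apply: cG1 => X hX; left.
  - by apply: cD1 => X hX; right.
  move=> hall.
  have hB1 : forall i, i \in B.1 -> u i.
    by move=> i iB; rewrite -hF; apply: hall; right; exists i.
  move: nP; rewrite /PBc negb_and => /orP[/forallPn[i]|/forallPn[i]];
    rewrite negb_imply => /andP[iB hu].
    by case/negP: hu; apply: hB1.
  by exists (F i); split; [left; exists i | rewrite hF; exact: negbNE hu].
have nwit : forall B, PBc B u ->
   cons (pred1 true) (pred1 true) (cl_I f) (unionf Gu (imgset F B.1)) (unionf (imgset F B.2) Du) -> False.
  move=> B /andP[/forallP h1 /forallP h2] hc.
  have := (char (cl_I f) (cG1 _ (fun X hX => or_introl hX)) (cD1 _ (fun X hX => or_intror hX))).1 hc.
  case.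
    move=> X [hX|[i iB ->]]; first exact: hGu.
    by rewrite hF; exact: (implyP (h1 i) iB).
  move=> X [[[i iB ->]|hX] hv].
    by move: hv; rewrite hF; move: (implyP (h2 i) iB) => /negbTE ->.
  by move: (hDu X hX); rewrite hv.
split.
- case Ef: (f u).
  + case: (boolP (Xc Bp u)) => // nX; exfalso.
    have HL : cons (pred1 true) (pred1 true) (cl_I f) (addf Gu (App tt F)) Du.
      apply: L2 => B BS; apply: wit; apply: contra nX => hP; apply/existsP; exists B; by rewrite BS hP.
    have := (char (cl_I f) (cG1 _ (fun X hX => or_introl hX)) (cD1 _ (fun X hX => hX))).1 HL.
    case.
      by move=> X [hX|->]; [exact: hGu | rewrite eC Ef].
    by move=> X [hX hv]; move: (hDu X hX); rewrite hv.
  + symmetry; apply/negbTE/negP => /existsP[B /andP[BS hB]].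
    have HL : cons (pred1 true) (pred1 true) (cl_I f) (addf Gu (App tt F)) Du.
      apply/(char (cl_I f) (cG1 _ (fun X hX => or_introl hX)) (cD1 _ (fun X hX => hX))) => hall.
      by move: (hall (App tt F) (or_intror erefl)); rewrite eC Ef.
    exact: nwit hB (L1 HL B BS).
- case Ef: (f u) => /=.
  + symmetry; apply/negbTE/negP => /existsP[B /andP[BS hB]].
    have HR : cons (pred1 true) (pred1 true) (cl_I f) Gu (addf Du (App tt F)).
      apply/(char (cl_I f) (cG1 _ (fun X hX => hX)) (cD1 _ (fun X hX => or_introl hX))) => hall.
      by exists (App tt F); split; [right | rewrite eC Ef].
    exact: nwit hB (R1 HR B BS).
  + case: (boolP (Xc Bc u)) => // nX; exfalso.
    have HR : cons (pred1 true) (pred1 true) (cl_I f) Gu (addf Du (App tt F)).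
      apply: R2 => B BS; apply: wit; apply: contra nX => hP; apply/existsP; exists B; by rewrite BS hP.
    have := (char (cl_I f) (cG1 _ (fun X hX => hX)) (cD1 _ (fun X hX => or_introl hX))).1 HR.
    case; first exact: hGu.
    move=> X [[hX|->] hv]; first by move: (hDu X hX); rewrite hv.
    by move: hv; rewrite eC Ef.
Qed.

Section GC.
Variables (V : finType) (one zero : V) (Dp Dc : {set V}).
Hypotheses (one_p : one \in Dp) (zero_p : zero \notin Dp) (one_c : one \in Dc) (zero_c : zero \notin Dc).
Variables (K : Type) (ar : K -> nat) (I : interp V ar).

Definition gcond (a b : V) : pred V := fun x =>
  ((x \in Dp) == (a \notin Dc) || (b \in Dp)) && ((x \in Dc) == (a \notin Dp) || (b \in Dc)).
Definition o0 : 'I_2 := @Ordinal 2 0 isT.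
Definition o1 : 'I_2 := @Ordinal 2 1 isT.
Definition gimp (w : 'I_2 -> V) : V := odflt one [pick x | gcond (w o0) (w o1) x].
Lemma gimp_spec w : gcond (w o0) (w o1) (gimp w).
Proof.
rewrite /gimp; case: pickP => //= Hn; exfalso.
move: (Hn one) (Hn zero) (Hn (w o0)) (Hn (w o1)); rewrite /gcond.
rewrite one_p one_c (negbTE zero_p) (negbTE zero_c).
by case: (w o0 \in Dp); case: (w o0 \in Dc); case: (w o1 \in Dp); case: (w o1 \in Dc).
Qed.

Lemma Gcond : G_conditional (mem Dp) (mem Dc) I gimp.
Proof.
rewrite /G_conditional /= => Gamma Delta A B.
set L := ext_I I gimp.
set C := App None (pair2 A B).
have ep : forall v, (eval L v C \in Dp) = (eval L v A \notin Dc) || (eval L v B \in Dp).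
  move=> v; by case/andP: (gimp_spec (fun i => eval L v (pair2 A B i))) => /eqP -> _.
have ec : forall v, (eval L v C \in Dc) = (eval L v A \notin Dp) || (eval L v B \in Dc).
  move=> v; by case/andP: (gimp_spec (fun i => eval L v (pair2 A B i))) => _ /eqP ->.
split; split.
- move=> H v Hv.
  have hA : eval L v A \in Dp by apply: Hv; right.
  have [X [[hX|->] hc]] := H v (fun X hX => Hv X (or_introl hX)).
    by exists X; split => //; left.
  have : eval L v C \in Dc := hc.
  rewrite ec hA /= => hB; by exists B; split => //; right.
- move=> H v Hv.
  case E: (eval L v C \in Dc).
    by exists C; split => //; right.
  move: E; rewrite ec => /norP[/negbNE hA /negP hB].
  have HvA : forall X, addf Gamma A X -> eval L v X \in Dp.
    by move=> X [hX|->]; [exact: Hv | exact: hA].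
  have [X [[hX|->] hc]] := H v HvA.
    by exists X; split => //; left.
  by case: hB.
- move=> H; split.
  + move=> v Hv.
    case E: (eval L v A \in Dc).
      by exists A; split => //; right.
    have HvC : forall X, addf Gamma C X -> eval L v X \in Dp.
      by move=> X [hX|->]; [exact: Hv | rewrite ep E].
    have [X [hX hc]] := H v HvC.
    by exists X; split => //; left.
  + move=> v Hv.
    have hB : eval L v B \in Dp by apply: Hv; right.
    have HvC : forall X, addf Gamma C X -> eval L v X \in Dp.
      by move=> X [hX|->]; [apply: Hv; left | rewrite ep hB orbT].
    exact: H v HvC.
- move=> [H1 H2] v Hv.
  have hI : eval L v C \in Dp by apply: Hv; right.
  move: hI; rewrite ep => /orP[hA|hB].
    have [X [[hX|->] hc]] := H1 v (fun X hX => Hv X (or_introl hX)).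
      by exists X.
    by move/negP: hA.
  by apply: H2 => X [hX|->]; [apply: Hv; left | exact: hB].
Qed.
End GC.

Theorem theorem6p1 (V : finType) (one zero : V) (Dp Dc : {set V})
  (K : Type) (ar : K -> nat) (I : interp V ar) :
  one != zero ->
  one \in Dp -> zero \notin Dp -> one \in Dc -> zero \notin Dc ->
  constant_expressive I ->
  (exists g : ('I_2 -> V) -> V, G_conditional (mem Dp) (mem Dc) I g) /\
  (forall (n : nat) (f : ('I_n -> bool) -> bool), classical_connective f ->
     exists (g : ('I_n -> V) -> V) (Bp Bc : {set ({set 'I_n} * {set 'I_n})}),
       regular_classical f Bp Bc /\
       @regular V (mem Dp) (mem Dc) (option K) (ext_ar ar n) (ext_I I g) None Bp Bc).
Proof.
move=> _ op zp oc zc _; split.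
  by exists (gimp one Dp Dc); exact: (Gcond op zp oc zc I).
move=> n f [Bp [Bc Hr]].
have Hcl := cl_char Hr.
have H : forall u, Xc Bp u = ~~ Xc Bc u.
  by move=> u; have [<- <-] := Hcl u; rewrite negbK.
exists (gcl one Dp Dc Bp Bc), Bp, Bc; split => //.
apply: reg_g => w; [exact: (gcl_spec op zp oc zc H w).1 | exact: (gcl_spec op zp oc zc H w).2].
Qed.
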